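(* The minimum number of subgraphs in a $\{K_3,K_4\}$-decomposition of $K_{19}$ is $D(19,\{3,4\})=35$, and a $\{K_3,K_4\}$-decomposition of $K_{19}$ attaining this minimum consists of $13$ copies of $K_3$ and $22$ copies of $K_4$.
   Context: A $\{K_3,K_4\}$-decomposition of the complete graph $K_v$ is a collection of subgraphs of $K_v$, each isomorphic to $K_3$ or $K_4$, such that every edge of $K_v$ lies in exactly one of them. $D(v,\{3,4\})$ denotes the minimum number of subgraphs in a $\{K_3,K_4\}$-decomposition of $K_v$. *)

(* Defs.v *)
From mathcomp Require Import all_boot.
Set Implicit Arguments. Unset Strict Implicit. Unset Printing Implicit Defensive.

(* A copy of K_3 / K_4 inside K_v is the complete
   subgraph on a 3- / 4-element vertex set, so it is determined by that set. *)
Definition K34_decomposition (v : nat) (B : seq {set 'I_v}) : Prop :=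
  (forall b, b \in B -> (#|b| == 3) || (#|b| == 4)) /\
  (forall x y : 'I_v, x != y -> count (fun b : {set 'I_v} => (x \in b) && (y \in b)) B = 1).

Definition num_K3 (v : nat) (B : seq {set 'I_v}) : nat :=
  count (fun b : {set 'I_v} => #|b| == 3) B.
Definition num_K4 (v : nat) (B : seq {set 'I_v}) : nat :=
  count (fun b : {set 'I_v} => #|b| == 4) B.

Definition D34_is (v n : nat) : Prop :=
  (exists B : seq {set 'I_v}, K34_decomposition B /\ size B = n) /\
  (forall B : seq {set 'I_v}, K34_decomposition B -> n <= size B).

(* Main.v *)
Require Import Defs.
From mathcomp Require Import all_boot.
From mathcomp Require Import zify.
Set Implicit Arguments. Unset Strict Implicit. Unset Printing Implicit Defensive.

Notation V := ('I_19).

Lemma sum_cnt (T : Type) (s : seq T) (P Q : pred T) :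
  count (fun b => P b && Q b) s = \sum_(b <- s | P b) (Q b : nat).
Proof.
elim: s => [|b s IH]; first by rewrite big_nil.
by rewrite /= big_cons IH; case: (P b).
Qed.

Lemma count_sum (T : Type) (s : seq T) (Q : pred T) :
  count Q s = \sum_(b <- s) (Q b : nat).
Proof.
elim: s => [|b s IH]; first by rewrite big_nil.
by rewrite /= big_cons IH.
Qed.

Lemma inner (Y b : {set V}) : \sum_(y in Y) (y \in b : nat) = #|b :&: Y|.
Proof.
rewrite -sum1_card [RHS]big_mkcond [LHS]big_mkcond /=.
apply: eq_bigr => y _; rewrite inE.
by case: (y \in b); case: (y \in Y).
Qed.

Lemma master (B : seq {set V}) (Y : {set V}) (F : {set V} -> nat) :
  \sum_(y in Y) \sum_(b <- B | y \in b) F b = \sum_(b <- B) #|b :&: Y| * F b.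
Proof.
transitivity (\sum_(y in Y) \sum_(b <- B) (y \in b) * F b).
  apply: eq_bigr => y _; rewrite big_mkcond; apply: eq_bigr => b _.
  by case: (y \in b); rewrite ?mul1n ?mul0n.
rewrite exchange_big /=; apply: eq_bigr => b _.
by rewrite -big_distrl /= inner.
Qed.

Lemma elem_le (r : seq {set V}) (P : pred {set V}) F b :
  b \in r -> P b -> F b <= \sum_(i <- r | P i) F i.
Proof. by move=> br Pb; rewrite (big_rem _ br) Pb /=; exact: leq_addr. Qed.

Lemma eq_sum_in (r : seq {set V}) (P : pred {set V}) F1 F2 :
  (forall b, b \in r -> P b -> F1 b = F2 b) ->
  \sum_(b <- r | P b) F1 b = \sum_(b <- r | P b) F2 b.
Proof.
move=> h; rewrite big_seq_cond [RHS]big_seq_cond.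
by apply: eq_bigr => b /andP [bB Pb]; exact: h.
Qed.

Lemma sum9 (f : nat -> nat) :
  \sum_(i < 9) f i = f 0 + f 1 + f 2 + f 3 + f 4 + f 5 + f 6 + f 7 + f 8.
Proof. by rewrite !big_ord_recr big_ord0 /=. Qed.

Section Lower.
Variable B : seq {set V}.
Hypothesis Hsz : forall b, b \in B -> (#|b| == 3) || (#|b| == 4).
Hypothesis Hp : forall x y : V, x != y ->
  count (fun b : {set V} => (x \in b) && (y \in b)) B = 1.

Lemma local x (Y : {set V}) : x \notin Y ->
  \sum_(b <- B | x \in b) #|b :&: Y| = #|Y|.
Proof.
move=> xY; rewrite -sum1_card.
transitivity (\sum_(y in Y) \sum_(b <- B | x \in b) (y \in b : nat)).
  by rewrite exchange_big /=; apply: eq_bigr => b _; rewrite inner.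
apply: eq_bigr => y yY.
rewrite -(sum_cnt B (fun b => x \in b) (fun b => y \in b)) Hp //.
by apply/eqP => exy; rewrite exy yY in xY.
Qed.

Definition tx x := count (fun b : {set V} => (x \in b) && (#|b| == 3)) B.
Definition S := [set x | tx x == 0].
Definition jb (b : {set V}) := #|b :&: S|.
Definition typ (b : {set V}) := if #|b| == 3 then 5 + jb b else jb b.
Definition C (P : pred {set V}) (i : nat) :=
  count (fun b => P b && (typ b == i)) B.
Definition sz (i : nat) := if 5 <= i then 3 else 4.
Definition jj (i : nat) := if 5 <= i then i - 5 else i.

Lemma typ_prop b : b \in B ->
  [/\ typ b < 9, #|b| = sz (typ b) & jb b = jj (typ b)].
Proof.
move=> /Hsz hb.
have hj : jb b <= #|b| by apply: subset_leq_card; apply: subsetIl.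
rewrite /typ /sz /jj; case/orP: hb => /eqP E; rewrite E /= in hj *.
  by split; lia.
have -> : (5 <= jb b) = false by apply/negbTE; rewrite -ltnNge; lia.
by split; lia.
Qed.

Lemma typ_dec (P : pred {set V}) (G : nat -> nat) :
  \sum_(b <- B | P b) G (typ b) =
  G 0 * C P 0 + G 1 * C P 1 + G 2 * C P 2 + G 3 * C P 3 + G 4 * C P 4 +
  G 5 * C P 5 + G 6 * C P 6 + G 7 * C P 7 + G 8 * C P 8.
Proof.
rewrite -(sum9 (fun i => G i * C P i)).
transitivity (\sum_(b <- B | P b) \sum_(i < 9) G i * (typ b == i)).
  apply: eq_sum_in => b bB _; case: (typ_prop bB) => lt _ _.
  move: (typ b) lt => t; rewrite (sum9 (fun i => G i * (t == i))).
  by case: t => [|[|[|[|[|[|[|[|[|t]]]]]]]]] //= _; rewrite !muln0 ?muln1 ?addn0 ?add0n.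
rewrite exchange_big /=; apply: eq_bigr => i _.
by rewrite /C sum_cnt big_distrr.
Qed.

Notation N x := (C (fun b : {set V} => x \in b)).
Notation M := (C (fun _ : {set V} => true)).

Lemma size_eq b : b \in B -> #|b| = sz (typ b).
Proof. by case/typ_prop. Qed.
Lemma jb_eq b : b \in B -> jb b = jj (typ b).
Proof. by case/typ_prop. Qed.

Lemma deg x : \sum_(b <- B | x \in b) (#|b| - 1) = 18.
Proof.
have := @local x [set~ x]; rewrite setC11 cardsC1 card_ord => /(_ isT) h.
transitivity (19.-1); last by []. rewrite -h.
apply: eq_sum_in => b bB xb.
by rewrite -setDE (cardsD1 x b) xb add1n subn1.
Qed.

Lemma vdeg x :
  3 * (N x 0 + N x 1 + N x 2 + N x 3 + N x 4) +
  2 * (N x 5 + N x 6 + N x 7 + N x 8) = 18.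
Proof.
rewrite -[RHS](deg x) (eq_sum_in (F2 := fun b => (fun i => sz i - 1) (typ b))).
  by rewrite (typ_dec _ (fun i => sz i - 1)) /sz /=; lia.
by move=> b bB _; rewrite size_eq.
Qed.

Lemma vtx x : tx x = N x 5 + N x 6 + N x 7 + N x 8.
Proof.
rewrite /tx sum_cnt (eq_sum_in (F2 := fun b => (fun i => nat_of_bool (5 <= i)) (typ b))).
  by rewrite (typ_dec _ (fun i => nat_of_bool (5 <= i))) /=; lia.
by move=> b bB _; rewrite size_eq /sz; case: (5 <= typ b).
Qed.

Lemma inS x : (x \in S) = (tx x == 0).
Proof. by rewrite inE. Qed.

Lemma inS0 x : x \in S -> tx x = 0.
Proof. by rewrite inS => /eqP. Qed.

Lemma vS x : x \in S ->
  N x 1 + 2 * N x 2 + 3 * N x 3 + 4 * N x 4 + N x 6 + 2 * N x 7 + 3 * N x 8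
  = #|S| - 1 + (N x 0 + N x 1 + N x 2 + N x 3 + N x 4 + N x 5 + N x 6 + N x 7 + N x 8).
Proof.
move=> xS.
have h1 := @local x (S :\ x) ltac:(by rewrite setD11).
have h2 : #|S :\ x| = #|S| - 1 by rewrite [#|S|](cardsD1 x) xS add1n subn1.
have h3 : \sum_(b <- B | x \in b) jb b = \sum_(b <- B | x \in b) (#|b :&: (S :\ x)| + 1).
  apply: eq_sum_in => b bB xb.
  by rewrite /jb setIDA [#|b :&: S|](cardsD1 x) inE xb xS add1n addn1.
rewrite big_split /= h1 h2 in h3.
move: h3; rewrite (eq_sum_in (F2 := fun b => (fun i => jj i) (typ b))); last first.
  by move=> b bB _; rewrite jb_eq.
rewrite (typ_dec _ (fun i => jj i)).
rewrite (_ : \sum_(b <- B | x \in b) 1 = \sum_(b <- B | x \in b) (fun _ => 1) (typ b)) //.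
rewrite (typ_dec _ (fun _ => 1)) /jj /=; lia.
Qed.

Lemma vN0 x : x \in S -> N x 0 = 0.
Proof.
move=> xS; rewrite /C; transitivity (count pred0 B); last exact: count_pred0.
apply: eq_in_count => b bB /=.
case xb: (x \in b) => //=; apply/negbTE.
case: (typ_prop bB) => _ _; rewrite /jj; case: ifP => h5 hj.
  by apply: contraTneq h5 => ->.
rewrite -hj /jb -lt0n card_gt0; apply/set0Pn; exists x.
by rewrite in_setI xb xS.
Qed.

Lemma vT x : x \notin S ->
  N x 1 + 2 * N x 2 + 3 * N x 3 + 4 * N x 4 + N x 6 + 2 * N x 7 + 3 * N x 8 = #|S|.
Proof.
move=> xS; rewrite -(local xS).
rewrite (eq_sum_in (F2 := fun b => (fun i => jj i) (typ b))); last first.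
  by move=> b bB _; rewrite -jb_eq.
by rewrite (typ_dec _ (fun i => jj i)) /jj /=; lia.
Qed.

Lemma vT4 x : x \notin S -> N x 4 = 0.
Proof.
move=> xS; rewrite /C; transitivity (count pred0 B); last exact: count_pred0.
apply: eq_in_count => b bB /=.
case xb: (x \in b) => //=; apply/negbTE/eqP => h4.
case: (typ_prop bB); rewrite h4 /sz /jj /= => _ hs hj.
have hh := cardsID S b; rewrite /jb in hj.
have h0 : #|b :\: S| = 0.
  by move: hh; rewrite hj hs => /(congr1 (fun n => n - 4)); rewrite addKn subnn.
move/cards0_eq/setP/(_ x): h0.
by rewrite in_setD in_set0 xb xS.
Qed.

Lemma vle x i : N x i <= M i.
Proof. by apply: sub_count => b /andP [_ ->]. Qed.

Lemma GT (G : nat -> nat) :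
  \sum_x \sum_(b <- B | x \in b) G (typ b) = \sum_(b <- B) (fun i => sz i * G i) (typ b).
Proof.
transitivity (\sum_(x in [set: V]) \sum_(b <- B | x \in b) G (typ b)).
  by apply: eq_bigl => y; rewrite in_setT.
rewrite master; apply: eq_sum_in => b bB _.
by rewrite setIT size_eq.
Qed.

Lemma GS (G : nat -> nat) :
  \sum_(x in S) \sum_(b <- B | x \in b) G (typ b) = \sum_(b <- B) (fun i => jj i * G i) (typ b).
Proof.
rewrite master; apply: eq_sum_in => b bB _.
by rewrite -jb_eq.
Qed.

Lemma sizeB : size B = M 0 + M 1 + M 2 + M 3 + M 4 + M 5 + M 6 + M 7 + M 8.
Proof.
rewrite -sum1_size (_ : \sum_(b <- B) 1 = \sum_(b <- B) (fun _ => 1) (typ b)) //.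
by rewrite (typ_dec _ (fun _ => 1)) /=; lia.
Qed.

Lemma numK3 : num_K3 B = M 5 + M 6 + M 7 + M 8.
Proof.
rewrite /num_K3 count_sum (eq_sum_in (F2 := fun b => (fun i => nat_of_bool (5 <= i)) (typ b))).
  by rewrite (typ_dec _ (fun i => nat_of_bool (5 <= i))) /=; lia.
by move=> b bB _; rewrite size_eq /sz; case: (5 <= typ b).
Qed.

Lemma numK4 : num_K4 B = M 0 + M 1 + M 2 + M 3 + M 4.
Proof.
rewrite /num_K4 count_sum (eq_sum_in (F2 := fun b => (fun i => nat_of_bool (i < 5)) (typ b))).
  by rewrite (typ_dec _ (fun i => nat_of_bool (i < 5))) /=; lia.
by move=> b bB _; rewrite size_eq /sz; case: (ltnP (typ b) 5).
Qed.

Lemma sumV (F : V -> nat) c : (forall x, F x = c) -> \sum_x F x = 19 * c.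
Proof. by move=> h; rewrite (eq_bigr (fun _ => c)) // big_const_ord iter_addn_0 mulnC. Qed.

Lemma sumS (A : {set V}) (F : V -> nat) c :
  (forall x, x \in A -> F x = c) -> \sum_(x in A) F x = #|A| * c.
Proof. by move=> h; rewrite (eq_bigr (fun _ => c)) //; exact: sum_nat_const. Qed.

Lemma splitS (F : V -> nat) : \sum_x F x = \sum_(x in S) F x + \sum_(x in ~: S) F x.
Proof.
rewrite (bigID (fun x => x \in S)) /=; congr (_ + _).
by apply: eq_bigl => x; rewrite in_setC.
Qed.

Lemma inner_t x : \sum_(b <- B | x \in b) (fun i => nat_of_bool (5 <= i)) (typ b) = tx x.
Proof. by rewrite (typ_dec _ (fun i => nat_of_bool (5 <= i))) vtx /=; lia. Qed.

Lemma inner_k x : \sum_(b <- B | x \in b) (fun i => nat_of_bool (i < 5)) (typ b) =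
  N x 0 + N x 1 + N x 2 + N x 3 + N x 4.
Proof. by rewrite (typ_dec _ (fun i => nat_of_bool (i < 5))) /=; lia. Qed.

Lemma inner_j x : \sum_(b <- B | x \in b) (fun i => jj i) (typ b) =
  N x 1 + 2 * N x 2 + 3 * N x 3 + 4 * N x 4 + N x 6 + 2 * N x 7 + 3 * N x 8.
Proof. by rewrite (typ_dec _ (fun i => jj i)) /jj /=; lia. Qed.

Lemma edge : 12 * (M 0 + M 1 + M 2 + M 3 + M 4) + 6 * (M 5 + M 6 + M 7 + M 8) = 342.
Proof.
have := GT (fun i => sz i - 1).
rewrite (sumV (c := 18)); last first.
  move=> x; rewrite -[RHS](deg x); apply: eq_sum_in => b bB _.
  by rewrite size_eq.
rewrite (typ_dec _ (fun i => sz i * (sz i - 1))) /sz /=; lia.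
Qed.

Lemma lower_main : 35 <= size B.
Proof.
rewrite leqNgt; apply/negP => hlt.
have szB := sizeB.
have E1 : 12 * (M 0 + M 1 + M 2 + M 3 + M 4) + 6 * (M 5 + M 6 + M 7 + M 8) = 342.
  have := GT (fun i => sz i - 1).
  rewrite (sumV (c := 18)); last first.
    move=> x; rewrite -[RHS](deg x); apply: eq_sum_in => b bB _.
    by rewrite size_eq.
  rewrite (typ_dec _ (fun i => sz i * (sz i - 1))) /sz /=; lia.
have E2 : \sum_x tx x = 3 * (M 5 + M 6 + M 7 + M 8).
  have := GT (fun i => nat_of_bool (5 <= i)).
  rewrite (eq_bigr _ (fun x _ => inner_t x)) => ->.
  rewrite (typ_dec _ (fun i => sz i * nat_of_bool (5 <= i))) /sz /=; lia.
have E2S : \sum_(x in S) tx x = 0.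
  by rewrite (sumS (c := 0)) ?muln0 // => x; rewrite inS => /eqP.
have tT : forall x, x \notin S -> 3 <= tx x.
  move=> x; rewrite inS => h; have := vdeg x; have := vtx x; lia.
have E3 : 3 * #|~: S| <= \sum_(x in ~: S) tx x.
  rewrite mulnC -sum_nat_const; apply: leq_sum => x; rewrite in_setC; exact: tT.
have cS : #|S| + #|~: S| = 19 by rewrite cardsC card_ord.
have S8 : 8 <= #|S|.
  move: E2; rewrite splitS E2S; lia.
have E4 : M 6 + 2 * M 7 + 3 * M 8 = 0.
  have := GS (fun i => nat_of_bool (5 <= i)).
  rewrite (eq_bigr _ (fun x _ => inner_t x)) E2S.
  rewrite (typ_dec _ (fun i => jj i * nat_of_bool (5 <= i))) /jj /=; lia.
have Ty : forall y, y \notin S ->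
    tx y = 3 /\ N y 0 + N y 1 + N y 2 + N y 3 + N y 4 = 4 /\ #|S| <= 12.
  move=> y yS; have := vdeg y; have := vtx y; have := vT yS; have := vT4 yS.
  have := vle y 6; have := vle y 7; have := vle y 8; have := tT y yS; lia.
have E5 : \sum_(x in ~: S) tx x = #|~: S| * 3.
  by apply: sumS => x; rewrite in_setC => /Ty [].
have hA : #|~: S| = M 5 + M 6 + M 7 + M 8.
  move: E2; rewrite splitS E2S E5; lia.
have [y yT] : exists y, y \in ~: S.
  by apply/card_gt0P; rewrite hA; lia.
have := Ty y; rewrite -in_setC => /(_ yT) [_ [_ S12]].
have E6 : #|S| * 6 = M 1 + 2 * M 2 + 3 * M 3 + 4 * M 4.
  have := GS (fun i => nat_of_bool (i < 5)).
  rewrite (sumS (c := 6)); last first.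
    move=> x xS; rewrite inner_k.
    have := vdeg x; have := vtx x; have := inS0 xS; lia.
  rewrite (typ_dec _ (fun i => jj i * nat_of_bool (i < 5))) /jj /=; lia.
have E7 : #|S| * (#|S| + 5) =
   M 1 + 4 * M 2 + 9 * M 3 + 16 * M 4 + M 6 + 4 * M 7 + 9 * M 8.
  have := GS (fun i => jj i).
  rewrite (sumS (c := #|S| + 5)); last first.
    move=> x xS; rewrite inner_j.
    have := vS xS; have := vdeg x; have := vtx x; have := inS0 xS; lia.
  rewrite (typ_dec _ (fun i => jj i * jj i)) /jj /=; lia.
have ha : #|~: S| = 7 \/ #|~: S| = 9 \/ #|~: S| = 11 by lia.
case: ha => [h|[h|h]].
- have hs : #|S| = 12 by lia.
  rewrite hs in E6 E7; lia.
- have hs : #|S| = 10 by lia.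
  rewrite hs in E6 E7; lia.
have hs : #|S| = 8 by lia.
rewrite hs in E6 E7.
have [[M4p [M10 M00]] | [M11 [M40 [M00 M33]]]] :
  (0 < M 4 /\ M 1 = 0 /\ M 0 = 0) \/ (M 1 = 1 /\ M 4 = 0 /\ M 0 = 0 /\ M 3 = 3) by lia.
- move: M4p; rewrite /C -has_count => /hasP [b bB /= /eqP t4].
  case: (typ_prop bB); rewrite t4 /sz /jj /= => _ hs4 hj4.
  have [x] : exists x, x \in b :&: S.
    by apply/set0Pn; rewrite -card_gt0; rewrite /jb in hj4; rewrite hj4.
  rewrite in_setI => /andP [xb xS].
  have : 0 < N x 4.
    by rewrite /C -has_count; apply/hasP; exists b => //; rewrite xb t4.
  have := vdeg x; have := vtx x; have := inS0 xS; have := vS xS; have := vN0 xS.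
  have := vle x 1; lia.
have : 0 < M 1 by lia.
rewrite /C -has_count => /hasP [b bB /= /eqP t1].
case: (typ_prop bB); rewrite t1 /sz /jj /= => _ hs4 hj1.
have [x0] : exists x, x \in b :&: S.
  by apply/set0Pn; rewrite -card_gt0; rewrite /jb in hj1; rewrite hj1.
rewrite in_setI => /andP [x0b x0S].
have : 0 < N x0 1.
  by rewrite /C -has_count; apply/hasP; exists b => //; rewrite x0b t1.
have := vdeg x0; have := vtx x0; have := inS0 x0S; have := vS x0S; have := vN0 x0S.
have := vle x0 1; have := vle x0 4 => ? ? ? ? ? ? ? ?.
have N03 : N x0 3 = 2 by lia.
set W := b :\: S.
have hW : #|W| = 3.
  by have := cardsID S b; rewrite /jb in hj1; rewrite hj1 hs4 /W => /(congr1 (fun n => n - 1)); rewrite addKn.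
have hW3 : forall z, z \in W -> 1 <= N z 3.
  move=> z; rewrite in_setD => /andP [yS yb].
  have : 0 < N z 1.
    by rewrite /C -has_count; apply/hasP; exists b => //; rewrite yb t1.
  have := Ty z yS; have := vdeg z; have := vtx z; have := vT yS; have := vT4 yS.
  have := vle z 0; have := vle z 1; have := vle z 6; have := vle z 7; have := vle z 8.
  lia.
have P1 : #|W| <= \sum_(y in W) N y 3.
  by rewrite -sum1_card; apply: leq_sum => z zW; exact: hW3.
have P2 : \sum_(y in W) N y 3 = \sum_(b' <- B) #|b' :&: W| * (typ b' == 3).
  rewrite -(master B W (fun b' => nat_of_bool (typ b' == 3))).
  by apply: eq_bigr => z _; rewrite /C sum_cnt.
pose F b' := #|b' :&: W| * (typ b' == 3).
have Pa : \sum_(b' <- B) F b' <=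
   \sum_(b' <- B) ((x0 \notin b') * (typ b' == 3)) + \sum_(b' <- B) ((x0 \in b') * F b').
  rewrite -big_split big_seq [X in _ <= X]big_seq; apply: leq_sum => b' b'B.
  case: (x0 \in b'); rewrite /= ?mul1n ?mul0n ?add0n ?addn0 //.
  rewrite /F; case t3: (typ b' == 3); rewrite ?muln0 ?muln1 //.
  case: (typ_prop b'B); rewrite (eqP t3) /sz /jj /= => _ hsb hjb.
  have h1 : #|b' :\: S| = 1.
    by have := cardsID S b'; rewrite /jb in hjb; rewrite hjb hsb => /(congr1 (fun n => n - 3)); rewrite addKn.
  rewrite -[X in _ <= X]h1; apply: subset_leq_card; apply/subsetP => z.
  by rewrite in_setI !in_setD => /andP [zb' /andP [zS _]]; rewrite zS zb'.
have hM3 : M 3 = \sum_(b' <- B) nat_of_bool (typ b' == 3) by rewrite /C count_sum.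
have hN3 : N x0 3 = \sum_(b' <- B) (x0 \in b') * (typ b' == 3).
  by rewrite /C count_sum; apply: eq_bigr => b' _; rewrite mulnb.
have hsp : \sum_(b' <- B) ((x0 \notin b') * (typ b' == 3)) +
    \sum_(b' <- B) ((x0 \in b') * (typ b' == 3)) = \sum_(b' <- B) nat_of_bool (typ b' == 3).
  rewrite -big_split; apply: eq_bigr => b' _ /=.
  by case: (x0 \in b'); rewrite /= ?mul0n ?mul1n ?add0n ?addn0.
have hloc : \sum_(b' <- B | x0 \in b') #|b' :&: W| = 3.
  by rewrite local ?hW // in_setD x0S.
have hsp2 : \sum_(b' <- B | x0 \in b') #|b' :&: W| =
   \sum_(b' <- B) ((x0 \in b') * F b') +
   \sum_(b' <- B) ((x0 \in b') * (#|b' :&: W| * (typ b' != 3))).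
  rewrite big_mkcond -big_split; apply: eq_bigr => b' _ /=; rewrite /F.
  by case: (x0 \in b'); case: (typ b' == 3); rewrite /= ?muln1 ?muln0 ?addn0 ?add0n ?mul1n ?mul0n.
have hbW : b :&: W = W by apply/setIidPr; exact: subsetDl.
have hel : 3 <= \sum_(b' <- B) (x0 \in b') * (#|b' :&: W| * (typ b' != 3)).
  have := @elem_le B (fun _ => true)
   (fun b' => (x0 \in b') * (#|b' :&: W| * (typ b' != 3))) b bB isT.
  by rewrite /= x0b t1 hbW /= mul1n muln1 hW.
rewrite /F in Pa hsp2.
have u1 : \sum_(b' <- B) (x0 \in b') * (typ b' == 3) = 2 by rewrite -hN3.
have u2 : \sum_(b' <- B) nat_of_bool (typ b' == 3) = 3 by rewrite -hM3.
have u3 : \sum_(b' <- B) (x0 \notin b') * (typ b' == 3) = 1.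
  by move: hsp; rewrite u1 u2; lia.
have u4 : \sum_(b' <- B) (x0 \in b') * (#|b' :&: W| * (typ b' == 3)) = 0.
  by move: hsp2 hel; rewrite hloc; lia.
move: Pa P1; rewrite u3 u4 P2 hW; lia.
Qed.

End Lower.

Definition L : seq (seq nat) := [:: [:: 0; 1; 12; 14]; [:: 0; 2; 5; 6]; [:: 0; 3; 9; 16]; [:: 0; 4; 7; 18]; [:: 0; 8; 10; 13]; [:: 0; 11; 15; 17]; [:: 1; 2; 10; 17]; [:: 1; 3; 4; 15]; [:: 1; 5; 13; 18]; [:: 1; 6; 7; 9]; [:: 1; 8; 11; 16]; [:: 2; 4; 9; 11]; [:: 9; 13; 14; 15]; [:: 5; 9; 10; 12]; [:: 8; 9; 17; 18]; [:: 5; 7; 15; 16]; [:: 5; 11; 14]; [:: 3; 5; 17]; [:: 4; 5; 8]; [:: 6; 10; 15; 18]; [:: 2; 8; 12; 15]; [:: 4; 10; 16]; [:: 4; 6; 14; 17]; [:: 4; 12; 13]; [:: 3; 6; 8]; [:: 7; 8; 14]; [:: 3; 10; 14]; [:: 7; 10; 11]; [:: 6; 11; 13]; [:: 6; 12; 16]; [:: 7; 12; 17]; [:: 13; 16; 17]; [:: 2; 3; 7; 13]; [:: 2; 14; 16; 18]; [:: 3; 11; 12; 18]].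
Definition mk (s : seq nat) : {set 'I_19} := [set x : 'I_19 | nat_of_ord x \in s].
Definition Bex := map mk L.
Lemma card_mk s : uniq s -> all (fun i => i < 19) s -> #|mk s| = size s.
Proof.
move=> us als.
rewrite cardE -(size_map val).
apply: perm_size; apply: uniq_perm.
- by rewrite (map_inj_uniq val_inj) enum_uniq.
- exact: us.
move=> i; apply/mapP/idP.
  by case=> x; rewrite mem_enum inE => xs ->.
move=> iS; have ilt : i < 19 by move/allP: als => /(_ i iS).
by exists (Ordinal ilt); rewrite // mem_enum inE.
Qed.
Lemma t1 : all (fun s => uniq s && all (fun i => i < 19) s && ((size s == 3) || (size s == 4))) L.
Proof. by vm_compute. Qed.
Lemma t2 : all (fun x => all (fun y => (x == y) || (count (fun s => (x \in s) && (y \in s)) L == 1)) (iota 0 19)) (iota 0 19).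
Proof. by vm_compute. Qed.
Lemma exists_dec : (forall b, b \in Bex -> (#|b| == 3) || (#|b| == 4)) /\
  (forall x y : 'I_19, x != y -> count (fun b : {set 'I_19} => (x \in b) && (y \in b)) Bex = 1).
Proof.
split.
  move=> b /mapP [s sL ->]; move/allP: t1 => /(_ s sL) /andP [/andP [us als] h].
  by rewrite card_mk.
move=> x y xy.
rewrite /Bex count_map.
have -> : count (preim mk (fun b : {set 'I_19} => (x \in b) && (y \in b))) L
   = count (fun s => (nat_of_ord x \in s) && (nat_of_ord y \in s)) L.
  by apply: eq_count => s /=; rewrite !inE.
have hx : nat_of_ord x \in iota 0 19 by rewrite mem_iota ltn_ord.
have hy : nat_of_ord y \in iota 0 19 by rewrite mem_iota ltn_ord.
move/allP: t2 => /(_ x hx) /allP /(_ y hy).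
by case/orP => [/eqP/val_inj exy|/eqP //]; rewrite exy eqxx in xy.
Qed.
Lemma size_Bex : size Bex = 35. Proof. by []. Qed.

Theorem mainTheorem2 :
  D34_is 19 35 /\
  (forall B : seq {set 'I_19}, K34_decomposition B -> size B = 35 ->
     num_K3 B = 13 /\ num_K4 B = 22).
Proof.
split.
  split.
    by exists Bex; split; [exact: exists_dec | exact: size_Bex].
  by move=> B [H1 H2]; exact: (lower_main H1 H2).
move=> B [H1 H2] hs.
have e := edge H1 H2.
have k3 := numK3 H1.
have k4 := numK4 H1.
have sB := sizeB H1.
lia.
Qed.
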